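(* (i) Let $H=(V,E,(a,b))$ be an undirected multigraph with output pair in which any two distinct nodes are joined by at most one edge, and let $v\in V\setminus\{a,b\}$ be incident to at least one edge. Then there exists a finite sequence of operations from the node-based bank $\mathcal F_n$ that deletes $v$ and deletes no other node if and only if $v$ has at most $1$ neighbor. (ii) Let $H=(V,E,(a,b))$ be any directed multigraph with output pair and let $v\in V\setminus\{a,b\}$ be incident to at least one edge. Then there exists a finite sequence of operations from the edge-based bank $\mathcal F_e$ that deletes $v$ and deletes no other node if and only if $v$ has at most $2$ neighbors.
   Context: A (directed, resp. undirected) multigraph with output pair is $H=(V,E,(a,b))$ with finite node set $V$, $E$ a finite multiset of ordered (resp. unordered) pairs of nodes (loops and parallel edges allowed), and $a,b\in V$ a distinguished not necessarily distinct pair (the red edge, not in $E$). Two distinct nodes are neighbors if some edge of $E$ joins them. Node-based bank $\mathcal F_n$ (acting on undirected multigraphs): (N1) if $v\notin\{a,b\}$ and the only edge incident to $v$ is a single self-loop, delete $v$ and that loop; (N2) if a node has at least two self-loops, remove one of them; (N3) if $v\notin\{a,b\}$ has no self-loop and exactly one incident edge $\{v,u\}$, $u\ne v$, delete $v$ and that edge and add a self-loop at $u$; (N4) if $v\notin\{a,b\}$ has exactly one self-loop and exactly one other incident edge $\{v,u\}$, $u\neq v$, delete $v$ and its edges and add a self-loop at $u$. Edge-based bank $\mathcal F_e$ (acting on directed multigraphs): (E1) as N1; (E2) as N2; (E3) if $v\notin\{a,b\}$ has no self-loop and exactly one incident edge, which is $(v,u)$ with $u\ne v$, delete $v$ and that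 edge and add a self-loop $(u,u)$; (E4) replace a self-loop $(v,v)$ by an edge $(v,u)$ for some node $u\neq v$; (E5) if there are two parallel edges $(u,v),(u,v)$ with $u\ne v$, remove one of them; (E6) replace an edge $(u,v)$, $u\ne v$, by $(v,u)$; (E7) if $w\notin\{a,b\}$ has no self-loop and exactly two incident edges $(u,w)$ and $(w,v)$ with $u,v,w$ pairwise distinct, delete $w$ and these edges and add the edge $(u,v)$. *)

(* Defs.v *)
From mathcomp Require Import all_boot.
Set Implicit Arguments. Unset Strict Implicit. Unset Printing Implicit Defensive.

(* Node names range over a finite type T;
   the node set is a finite set V : {set T}; the edge multiset E is a list
   of pairs of nodes, considered up to permutation (perm_eq).  For the
   undirected setting an edge (x,y) is read as the unordered pair {x,y}.
   The output pair (a,b) is passed separately (it never changes). *)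
Record mgraph (T : finType) := MG { nodes : {set T}; edges : seq (T * T) }.

Section Defs.
Variable T : finType.

Definition joins (x y : T) (e : T * T) : bool := (e == (x, y)) || (e == (y, x)).

Definition incident (v : T) (e : T * T) : bool := (e.1 == v) || (e.2 == v).

Definition neighbors (E : seq (T * T)) (v : T) : {set T} :=
  [set u | (u != v) && has (joins v u) E].

Definition wf_graph (a b : T) (H : mgraph T) : Prop :=
  [/\ a \in nodes H, b \in nodes H &
      all (fun e => (e.1 \in nodes H) && (e.2 \in nodes H)) (edges H)].

Definition no_parallel (E : seq (T * T)) : Prop :=
  forall x y : T, x != y -> count (joins x y) E <= 1.

Inductive step_n (a b : T) : mgraph T -> mgraph T -> Prop :=
| N1 (V : {set T}) (E E' : seq (T * T)) v : v \in V -> v \notin [:: a; b] ->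
    perm_eq E ((v, v) :: E') -> ~~ has (incident v) E' ->
    step_n a b (MG V E) (MG (V :\ v) E')
| N2 (V : {set T}) (E E' : seq (T * T)) x : perm_eq E ((x, x) :: (x, x) :: E') ->
    step_n a b (MG V E) (MG V ((x, x) :: E'))
| N3 (V : {set T}) (E E' : seq (T * T)) v u e : v \in V -> v \notin [:: a; b] -> u != v -> joins v u e ->
    perm_eq E (e :: E') -> ~~ has (incident v) E' ->
    step_n a b (MG V E) (MG (V :\ v) ((u, u) :: E'))
| N4 (V : {set T}) (E E' : seq (T * T)) v u e : v \in V -> v \notin [:: a; b] -> u != v -> joins v u e ->
    perm_eq E ((v, v) :: e :: E') -> ~~ has (incident v) E' ->
    step_n a b (MG V E) (MG (V :\ v) ((u, u) :: E')).

Inductive step_e (a b : T) : mgraph T -> mgraph T -> Prop :=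
| E1 (V : {set T}) (E E' : seq (T * T)) v : v \in V -> v \notin [:: a; b] ->
    perm_eq E ((v, v) :: E') -> ~~ has (incident v) E' ->
    step_e a b (MG V E) (MG (V :\ v) E')
| E2 (V : {set T}) (E E' : seq (T * T)) x : perm_eq E ((x, x) :: (x, x) :: E') ->
    step_e a b (MG V E) (MG V ((x, x) :: E'))
| E3 (V : {set T}) (E E' : seq (T * T)) v u : v \in V -> v \notin [:: a; b] -> u != v ->
    perm_eq E ((v, u) :: E') -> ~~ has (incident v) E' ->
    step_e a b (MG V E) (MG (V :\ v) ((u, u) :: E'))
| E4 (V : {set T}) (E E' : seq (T * T)) v u : u \in V -> u != v ->
    perm_eq E ((v, v) :: E') ->
    step_e a b (MG V E) (MG V ((v, u) :: E'))
| E5 (V : {set T}) (E E' : seq (T * T)) u v : u != v ->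
    perm_eq E ((u, v) :: (u, v) :: E') ->
    step_e a b (MG V E) (MG V ((u, v) :: E'))
| E6 (V : {set T}) (E E' : seq (T * T)) u v : u != v ->
    perm_eq E ((u, v) :: E') ->
    step_e a b (MG V E) (MG V ((v, u) :: E'))
| E7 (V : {set T}) (E E' : seq (T * T)) u w v : w \in V -> w \notin [:: a; b] ->
    u != v -> u != w -> v != w ->
    perm_eq E ((u, w) :: (w, v) :: E') -> ~~ has (incident w) E' ->
    step_e a b (MG V E) (MG (V :\ w) ((u, v) :: E')).

Inductive star (R : mgraph T -> mgraph T -> Prop) : mgraph T -> mgraph T -> Prop :=
| star_refl G : star R G G
| star_step G1 G2 G3 : R G1 G2 -> star R G2 G3 -> star R G1 G3.

Definition deletes_exactly (R : mgraph T -> mgraph T -> Prop) (H : mgraph T) (v : T) : Prop :=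
  exists H', star R H H' /\ nodes H' = nodes H :\ v.

End Defs.

(* Main.v *)
Require Import Defs.
From mathcomp Require Import all_boot.
Set Implicit Arguments. Unset Strict Implicit. Unset Printing Implicit Defensive.

Section Aux.
Variable T : finType.
Implicit Types (x y v w d u : T) (e : T * T).

Lemma joinsC x y e : joins x y e = joins y x e.
Proof. by rewrite /joins orbC. Qed.

Lemma joins_inc x y e : joins x y e -> incident x e.
Proof. by case: e => p q; rewrite /joins /incident !xpair_eqE /= => /orP[]/andP[/eqP-> /eqP->]; rewrite eqxx ?orbT. Qed.

Lemma joins_loop x y z : joins x y (z, z) -> x = y.
Proof. by rewrite /joins !xpair_eqE => /orP[]/andP[/eqP<- /eqP<-]. Qed.

Lemma joins_uniq v w1 w2 e : joins v w1 e -> joins v w2 e -> w1 != v -> w1 = w2.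
Proof.
case: e => p q; rewrite /joins !xpair_eqE.
case/orP=> /andP[/eqP ? /eqP ?]; subst; case/orP=> /andP[/eqP ? /eqP ?]; subst;
  by rewrite ?eqxx.
Qed.

Lemma joins_incident v w d e : joins v w e -> incident d e -> d = v \/ d = w.
Proof.
case: e => p q; rewrite /joins /incident !xpair_eqE /=.
case/orP=> /andP[/eqP ? /eqP ?]; subst; case/orP=> /eqP ?; subst; auto.
Qed.

Lemma joins_self x y : joins x y (x, y).
Proof. by rewrite /joins eqxx. Qed.

Lemma joins_node v u e (V : {set T}) : joins v u e -> (e.1 \in V) && (e.2 \in V) -> u \in V.
Proof.
case: e => p q; rewrite /joins !xpair_eqE /=.
by move=> /orP[]/andP[/eqP-> /eqP->] /andP[].
Qed.

Lemma inc_nonloop v e : incident v e -> e != (v, v) -> exists2 u, u != v & joins v u e.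
Proof.
case: e => p q; rewrite /incident /= => /orP[]/eqP-> ne.
  exists q; last by rewrite joins_self.
  by apply: contra ne => /eqP->.
exists p; first by apply: contra ne => /eqP->.
by rewrite /joins eqxx orbT.
Qed.

Lemma perm_swap2 (s : seq (T * T)) e1 e2 : perm_eq (e1 :: e2 :: s) (e2 :: e1 :: s).
Proof. by apply/permPl; exact: (perm_catCA [:: e1] [:: e2] s). Qed.

Definition reach (R : mgraph T -> mgraph T -> Prop) G X :=
  exists H', star R G H' /\ nodes H' = X.

Lemma reach_step R G G' X : R G G' -> reach R G' X -> reach R G X.
Proof. by move=> st [H' [s e]]; exists H'; split=> //; apply: star_step st s. Qed.

Definition perm_ok (R : mgraph T -> mgraph T -> Prop) :=
  forall G1 G2 E1, R G1 G2 -> perm_eq E1 (edges G1) -> R (MG (nodes G1) E1) G2.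

Lemma reach_perm0 R G H' E1 : perm_ok R -> star R G H' -> perm_eq E1 (edges G) ->
    reach R (MG (nodes G) E1) (nodes H').
Proof.
move=> pok st; destruct st as [G0|G0 G2 G3 st s'] => p0.
  by exists (MG (nodes G0) E1); split; [constructor|].
by exists G3; split=> //; apply: star_step (pok _ _ _ st p0) s'.
Qed.

Lemma reach_perm R V E1 E2 X : perm_ok R -> perm_eq E1 E2 ->
  reach R (MG V E2) X -> reach R (MG V E1) X.
Proof.
move=> pok p [H' [s e]].
by move: (reach_perm0 pok s (E1:=E1) p); rewrite e.
Qed.

Definition shrink (R : mgraph T -> mgraph T -> Prop) :=
  forall G1 G2, R G1 G2 -> nodes G2 \subset nodes G1.

Lemma star_shrink R G1 G2 : shrink R -> star R G1 G2 -> nodes G2 \subset nodes G1.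
Proof.
move=> sh; elim=> [G|G G' G'' st _ IH] //.
exact: subset_trans IH (sh _ _ st).
Qed.

Lemma loops_red R (HN2 : forall V x S, R (MG V ((x,x)::(x,x)::S)) (MG V ((x,x)::S)))
  V X x S Lp : all (pred1 (x,x)) Lp ->
  reach R (MG V ((x,x)::S)) X -> reach R (MG V ((x,x)::Lp ++ S)) X.
Proof.
elim: Lp => [//|y Lp IH] /= /andP[/eqP-> aL] r.
by apply: reach_step (HN2 _ _ _) _; apply: IH.
Qed.

Lemma decomp v (E : seq (T * T)) :
  perm_eq E (filter (pred1 (v,v)) E ++ (filter (incident v) (filter (predC (pred1 (v, v))) E)
     ++ filter (predC (incident v)) (filter (predC (pred1 (v, v))) E))).
Proof.
apply: perm_trans (_ : perm_eq _ (filter (pred1 (v,v)) E ++ filter (predC (pred1 (v, v))) E)) _.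
  by rewrite perm_sym perm_filterC.
by rewrite perm_cat2l perm_sym perm_filterC.
Qed.


Variables a b : T.

Lemma perm_ok_n : perm_ok (step_n a b).
Proof.
move=> G1 G2 E1; case=> [V E E' v|V E E' x|V E E' v u e|V E E' v u e] /=; intros;
  econstructor; try eassumption; apply: perm_trans; eassumption.
Qed.

Lemma perm_ok_e : perm_ok (step_e a b).
Proof.
move=> G1 G2 E1; case=> [V E E' v|V E E' x|V E E' v u|V E E' v u|V E E' u v|V E E' u v|V E E' u w v] /=;
  intros; econstructor; try eassumption; apply: perm_trans; eassumption.
Qed.

Lemma shrink_n : shrink (step_n a b).
Proof. by move=> G1 G2; case=> *; rewrite /= ?subD1set. Qed.

Lemma shrink_e : shrink (step_e a b).
Proof. by move=> G1 G2; case=> *; rewrite /= ?subD1set. Qed.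


Lemma keep_gen (E E' l : seq (T * T)) d v w (V : {set T}) :
  perm_eq E (l ++ E') -> all (incident d) l -> v \in V :\ d -> w \in V :\ d ->
  has (joins v w) E -> has (joins v w) E'.
Proof.
move=> p al vV wV /hasP[e eE j]; move: eE; rewrite (perm_mem p) mem_cat => /orP[el|eE'].
  have := joins_incident j (allP al e el) => -[dv|dw]; subst d.
    by rewrite in_setD1 eqxx in vV.
  by rewrite in_setD1 eqxx in wV.
by apply/hasP; exists e.
Qed.

Lemma in_l (E E' l : seq (T * T)) v w :
  perm_eq E (l ++ E') -> ~~ has (incident v) E' -> has (joins v w) E ->
  exists2 e, e \in l & joins v w e.
Proof.
move=> p nh /hasP[e eE j]; move: eE; rewrite (perm_mem p) mem_cat => /orP[el|eE'].
  by exists e.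
by case/negP: nh; apply/hasP; exists e => //; apply: joins_inc j.
Qed.

Lemma joins_rev x y p q : joins x y (p, q) -> joins x y (q, p).
Proof. by rewrite /joins !xpair_eqE andbC orbC andbC. Qed.

Lemma keep_n G G2 v w : step_n a b G G2 -> v \in nodes G2 -> w \in nodes G2 -> w != v ->
  has (joins v w) (edges G) -> has (joins v w) (edges G2).
Proof.
case=> [V E E' d dV dab p nh|V E E' x p|V E E' d u e dV dab ud j p nh|V E E' d u e dV dab ud j p nh] /=
  vV wV wv hj.
- by apply: (keep_gen (l := [:: (d, d)]) p _ vV wV hj); rewrite /= /incident eqxx.
- case/hasP: hj => e eE j; suff: has (joins v w) ((x, x) :: E') by []; apply/hasP; exists e => //.
  by move: eE; rewrite (perm_mem p) !inE => /orP[->|/orP[->|->]]; rewrite ?orbT.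
- rewrite /= orbC (keep_gen (l := [:: e]) p _ vV wV hj) //=.
  by rewrite (joins_inc j).
- rewrite /= orbC (keep_gen (l := [:: (d, d); e]) p _ vV wV hj) //=.
  by rewrite (joins_inc j) /incident eqxx.
Qed.

Lemma surv_n G G2 v w1 w2 : step_n a b G G2 -> v \in nodes G -> w1 != w2 -> w1 != v -> w2 != v ->
  has (joins v w1) (edges G) -> has (joins v w2) (edges G) -> v \in nodes G2.
Proof.
case=> [V E E' d dV dab p nh|V E E' x p|V E E' d u e dV dab ud j p nh|V E E' d u e dV dab ud j p nh] /=
  vV n12 n1 n2 h1 h2 //; rewrite in_setD1 vV andbT; apply/eqP => vd; subst d.
- have [e1] := in_l (l := [:: (v, v)]) p nh h1; rewrite inE => /eqP-> /joins_loop.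
  by move/eqP: n1 => /[swap] ->.
- have [e1] := in_l (l := [:: e]) p nh h1; rewrite inE => /eqP-> j1.
  have [e2] := in_l (l := [:: e]) p nh h2; rewrite inE => /eqP-> j2.
  by move/eqP: n12; apply; apply: joins_uniq j1 j2 n1.
- have [e1] := in_l (l := [:: (v, v); e]) p nh h1; rewrite !inE => /orP[] /eqP-> j1.
    by move: n1; rewrite (joins_loop j1) eqxx.
  have [e2] := in_l (l := [:: (v, v); e]) p nh h2; rewrite !inE => /orP[] /eqP-> j2.
    by move: n2; rewrite (joins_loop j2) eqxx.
  by move/eqP: n12; apply; apply: joins_uniq j1 j2 n1.
Qed.


Lemma keep_e G G2 v w : step_e a b G G2 -> v \in nodes G2 -> w \in nodes G2 -> w != v ->
  has (joins v w) (edges G) -> has (joins v w) (edges G2).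
Proof.
case=> [V E E' d dV dab p nh|V E E' x p|V E E' d u dV dab ud p nh|V E E' x u uV ux p
  |V E E' p1 p2 n p|V E E' p1 p2 n p|V E E' p1 d p2 dV dab n1 n2 n3 p nh] /=
  vV wV wv hj.
- by apply: (keep_gen (l := [:: (d, d)]) p _ vV wV hj); rewrite /= /incident eqxx.
- case/hasP: hj => e eE j; suff: has (joins v w) ((x, x) :: E') by [].
  apply/hasP; exists e => //.
  by move: eE; rewrite (perm_mem p) !inE => /orP[->|/orP[->|->]]; rewrite ?orbT.
- rewrite /= orbC (keep_gen (l := [:: (d, u)]) p _ vV wV hj) //=.
  by rewrite /incident eqxx.
- case/hasP: hj => e eE j; suff: has (joins v w) E' by move=> ->; rewrite orbT.
  apply/hasP; exists e => //.
  move: eE; rewrite (perm_mem p) !inE => /orP[/eqP ee|//]; subst e.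
  by move: wv; rewrite (joins_loop j) eqxx.
- case/hasP: hj => e eE j; suff: has (joins v w) ((p1, p2) :: E') by [].
  apply/hasP; exists e => //.
  by move: eE; rewrite (perm_mem p) !inE => /orP[->|/orP[->|->]]; rewrite ?orbT.
- case/hasP: hj => e eE j; suff: has (joins v w) ((p2, p1) :: E') by [].
  move: eE; rewrite (perm_mem p) !inE => /orP[/eqP ee|eE]; subst.
    by rewrite /= joins_rev.
  by apply/hasP; exists e; rewrite // inE eE orbT.
- rewrite /= orbC (keep_gen (l := [:: (p1, d); (d, p2)]) p _ vV wV hj) //=.
  by rewrite /incident !eqxx !orbT.
Qed.

Lemma surv_e G G2 v w1 w2 w3 : step_e a b G G2 -> v \in nodes G ->
  [/\ w1 != w2, w2 != w3 & w3 != w1] -> [/\ w1 != v, w2 != v & w3 != v] ->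
  has (joins v w1) (edges G) -> has (joins v w2) (edges G) -> has (joins v w3) (edges G) ->
  v \in nodes G2.
Proof.
case=> [V E E' d dV dab p nh|V E E' x p|V E E' d u dV dab ud p nh|V E E' x u uV ux p
  |V E E' p1 p2 n p|V E E' p1 p2 n p|V E E' p1 d p2 dV dab n1 n2 n3 p nh] /=
  vV [n12 n23 n31] [m1 m2 m3] h1 h2 h3 //; rewrite in_setD1 vV andbT; apply/eqP => vd; subst d.
- have [e1] := in_l (l := [:: (v, v)]) p nh h1; rewrite inE => /eqP-> /joins_loop.
  by move/eqP: m1 => /[swap] ->.
- have [e1] := in_l (l := [:: (v, u)]) p nh h1; rewrite inE => /eqP-> j1.
  have [e2] := in_l (l := [:: (v, u)]) p nh h2; rewrite inE => /eqP-> j2.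
  by move/eqP: n12; apply; apply: joins_uniq j1 j2 m1.
- have key : forall w, w != v -> has (joins v w) E -> w = p1 \/ w = p2.
    move=> w wv h; have [e] := in_l (l := [:: (p1, v); (v, p2)]) p nh h.
    rewrite !inE => /orP[] /eqP-> j.
      by left; apply: (joins_uniq j) => //; rewrite /joins eqxx orbT.
    by right; apply: (joins_uniq j) => //; rewrite /joins eqxx.
  move: n12 n23 n31.
  by case: (key _ m1 h1) => ->; case: (key _ m2 h2) => ->; case: (key _ m3 h3) => ->;
    rewrite ?eqxx.
Qed.


Lemma reach_refl R G : reach R G (nodes G).
Proof. by exists G; split; [constructor|]. Qed.

Lemma nbrP E v u : (u \in neighbors E v) = (u != v) && has (joins v u) E.
Proof. by rewrite inE. Qed.

Lemma count_filter_le (p q : pred (T * T)) s : count p (filter q s) <= count p s.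
Proof. by rewrite count_filter; apply: sub_count => x /andP[]. Qed.

Lemma build_n (V : {set T}) E v : v \in V -> v \notin [:: a; b] -> no_parallel E ->
  has (incident v) E -> #|neighbors E v| <= 1 -> reach (step_n a b) (MG V E) (V :\ v).
Proof.
move=> vV vab np hinc hN.
set E1 := filter (predC (pred1 (v,v))) E.
set Lp := filter (pred1 (v,v)) E.
set R := filter (incident v) E1.
set O := filter (predC (incident v)) E1.
apply: (reach_perm perm_ok_n (decomp v E)); rewrite -/E1 -/Lp -/R -/O.
have hO : ~~ has (incident v) O.
  by apply/hasP => -[e]; rewrite mem_filter /= => /andP[/negP].
have hR : forall e, e \in R -> exists2 u, u != v & joins v u e /\ u \in neighbors E v.
  move=> e; rewrite !mem_filter /= => /andP[ie /andP[ne eE]].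
  have [u uv j] := inc_nonloop ie ne; exists u => //; split => //.
  by rewrite nbrP uv; apply/hasP; exists e.
have szR : size R <= 1.
  case eR: R => [|e1 [|e2 R']] //.
  have [u1 u1v [j1 n1]] := hR e1 ltac:(by rewrite eR inE eqxx).
  have [u2 u2v [j2 n2]] := hR e2 ltac:(by rewrite eR !inE eqxx orbT).
  have u12 : u2 = u1 by have := card_le1P hN u1 n1 u2; rewrite n2 inE => /esym/eqP.
  subst u2.
  have := np v u1; rewrite eq_sym u1v => /(_ isT).
  have : count (joins v u1) R <= count (joins v u1) E.
    by rewrite /R /E1; apply: leq_trans (count_filter_le _ _ _) (count_filter_le _ _ _).
  by rewrite eR /= j1 j2 => /leq_trans H /H.
case eL: Lp => [|y Lp'].
  have [e eR] : exists e, R = [:: e].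
    case eR: R szR => [|e [|]] // _; last by exists e.
    case/hasP: hinc => e eE ie; case: (boolP (e == (v, v))) => ne.
      by have: e \in Lp; [rewrite /Lp mem_filter /= ne | rewrite eL].
    by have: e \in R; [rewrite /R /E1 !mem_filter ie /= ne | rewrite eR].
  have [u uv [j _]] := hR e ltac:(by rewrite eR inE).
  rewrite eR /=.
  apply: reach_step (N3 vV vab uv j (perm_refl _) hO) _.
  exact: reach_refl.
have := filter_all (pred1 (v,v)) E; rewrite -/Lp eL /= => /andP[/eqP ey aL]; subst y.
apply: (loops_red _ aL).
  by move=> V0 x S; apply: N2; exact: perm_refl.
case eR: R szR => [|e [|]] // _.
  apply: reach_step (N1 vV vab (perm_refl _) hO) _; exact: reach_refl.
have [u uv [j _]] := hR e ltac:(by rewrite eR inE).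
apply: reach_step (N4 vV vab uv j (perm_refl _) hO) _; exact: reach_refl.
Qed.


Lemma orient_e (V X : {set T}) x y e S : x != y -> joins x y e ->
  reach (step_e a b) (MG V ((x,y)::S)) X -> reach (step_e a b) (MG V (e::S)) X.
Proof.
move=> xy; rewrite /joins => /orP[]/eqP-> // r.
by apply: reach_step (@E6 _ a b V _ _ y x _ (perm_refl _)) r; rewrite eq_sym.
Qed.

Lemma merge_e (V X : {set T}) x y S : x != y -> forall Rl e, all (joins x y) (e :: Rl) ->
  reach (step_e a b) (MG V ((x,y)::S)) X -> reach (step_e a b) (MG V (e :: Rl ++ S)) X.
Proof.
move=> xy; elim=> [|e' Rl IH] e /=.
  by rewrite andbT => j; apply: orient_e.
case/and3P=> je je' aR r; apply: (orient_e xy je).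
apply: (reach_perm perm_ok_e (perm_swap2 _ _ _)).
apply: (orient_e xy je').
apply: reach_step (@E5 _ a b V _ _ x y xy (perm_refl _)) _.
by apply: IH => //=; rewrite joins_self.
Qed.

Lemma loops_to_edge (V X : {set T}) v u : u \in V -> u != v -> forall Lp S, all (pred1 (v,v)) Lp ->
  reach (step_e a b) (MG V (nseq (size Lp) (v,u) ++ S)) X -> reach (step_e a b) (MG V (Lp ++ S)) X.
Proof.
move=> uV uv; elim=> [//|y Lp IH] S /= /andP[/eqP-> aL] r.
apply: reach_step (@E4 _ a b V _ _ v u uV uv (perm_refl _)) _.
apply: (reach_perm perm_ok_e (_ : perm_eq _ (Lp ++ (v,u) :: S))).
  by apply/permPl; exact: (perm_catCA [:: (v,u)] Lp S).
apply: IH aL _.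
apply: (reach_perm perm_ok_e (_ : perm_eq _ ((v,u) :: nseq (size Lp) (v,u) ++ S))) r.
by apply/permPl; exact: (perm_catCA (nseq (size Lp) (v,u)) [:: (v,u)] S).
Qed.


Lemma build_e (V : {set T}) E v : v \in V -> v \notin [:: a; b] ->
  all (fun e => (e.1 \in V) && (e.2 \in V)) E ->
  has (incident v) E -> #|neighbors E v| <= 2 -> reach (step_e a b) (MG V E) (V :\ v).
Proof.
move=> vV vab wfE hinc hN.
set Ef := filter (predC (pred1 (v,v))) E.
set Lp := filter (pred1 (v,v)) E.
set R := filter (incident v) Ef.
set O := filter (predC (incident v)) Ef.
apply: (reach_perm perm_ok_e (decomp v E)); rewrite -/Ef -/Lp -/R -/O.
have hO : ~~ has (incident v) O.
  by apply/hasP => -[e]; rewrite mem_filter /= => /andP[/negP].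
have hR : forall e, e \in R -> exists2 u, u != v & joins v u e /\ u \in neighbors E v.
  move=> e; rewrite !mem_filter /= => /andP[ie /andP[ne eE]].
  have [u uv j] := inc_nonloop ie ne; exists u => //; split => //.
  by rewrite nbrP uv; apply/hasP; exists e.
have inR : forall e w, e \in E -> joins v w e -> w != v -> e \in R.
  move=> e w eE j wv; rewrite /R /Ef !mem_filter /= (joins_inc j) eE andbT.
  by apply: contra wv => /eqP ee; subst e; rewrite (joins_loop j).
have aL : all (pred1 (v,v)) Lp by exact: filter_all.
have hnon : 0 < size Lp + size R.
  case/hasP: hinc => e eE ie; case: (boolP (e == (v, v))) => ne.
    by have: e \in Lp; [rewrite /Lp mem_filter /= ne | case: (Lp) => //= *; rewrite addSn].
  have: e \in R by rewrite /R /Ef !mem_filter ie /= ne.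
  by case: (R) => //= *; rewrite addnS.
have nV : forall u, u \in neighbors E v -> u != v /\ u \in V.
  move=> u; rewrite nbrP => /andP[uv /hasP[e eE j]]; split => //.
  exact: joins_node j (allP wfE e eE).
move: hN; case hc: #|neighbors E v| => [|[|[|]]] // _.
- have N0 := cards0_eq hc.
  case eR: R => [|e R'].
    case eL: Lp aL hnon => [|y Lp']; first by rewrite eR.
    rewrite /= => /andP[/eqP -> aL'] _.
    apply: (loops_red _ aL').
      by move=> V0 x S; apply: E2; exact: perm_refl.
    apply: reach_step (E1 vV vab (perm_refl _) hO) _; exact: reach_refl.
  have [u _ [_]] := hR e ltac:(by rewrite eR inE eqxx).
  by rewrite N0 inE.
- move/eqP: hc => /cards1P[u hu].
  have [uv uV] := nV u ltac:(by rewrite hu inE).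
  apply: (loops_to_edge uV uv aL); rewrite catA.
  have aQ : all (joins v u) (nseq (size Lp) (v,u) ++ R).
    rewrite all_cat all_nseq joins_self orbT /=; apply/allP => e eR.
    have [u1 _ [j n1]] := hR e eR; move: n1; rewrite hu inE => /eqP eu; subst u1; exact: j.
  case eQ: (nseq (size Lp) (v,u) ++ R) aQ => [|e Q'] aQ.
    by move/(congr1 size): eQ; rewrite size_cat size_nseq => H; move: hnon; rewrite H.
  apply: (merge_e _ aQ); first by rewrite eq_sym.
  apply: reach_step (E3 vV vab uv (perm_refl _) hO) _; exact: reach_refl.
- move/eqP: hc => /cards2P[u1 [u2 [n12 hu]]].
  have [u1v u1V] := nV u1 ltac:(by rewrite hu !inE eqxx).
  have [u2v u2V] := nV u2 ltac:(by rewrite hu !inE eqxx orbT).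
  apply: (loops_to_edge u1V u1v aL); rewrite catA.
  set Q := nseq (size Lp) (v,u1) ++ R.
  set Q1 := filter (joins v u1) Q.
  set Q2 := filter (predC (joins v u1)) Q.
  apply: (reach_perm perm_ok_e (_ : perm_eq _ (Q1 ++ Q2 ++ O))).
    by rewrite catA perm_cat2r perm_sym perm_filterC.
  have witness : forall w, w \in neighbors E v -> exists2 e, e \in Q & joins v w e.
    move=> w; rewrite nbrP => /andP[wv /hasP[e eE j]]; exists e => //.
    by rewrite mem_cat (inR e w eE j wv) orbT.
  have aQ1 : all (joins u1 v) Q1.
    by apply/allP => e; rewrite mem_filter joinsC => /andP[].
  have aQ2 : all (joins v u2) Q2.
    apply/allP => e; rewrite mem_filter mem_cat => /andP[/= nj /orP[]].
      by case/nseqP => ee _; subst e; rewrite joins_self in nj.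
    move=> eR; have [u' _ [j n']] := hR e eR; move: n'; rewrite hu !inE => /orP[]/eqP eu; subst u' => //.
    by move: nj; rewrite /= j.
  case eQ1: Q1 aQ1 => [|f1 Q1'] aQ1.
    have [e eQ j] := witness u1 ltac:(by rewrite hu !inE eqxx).
    by have: e \in Q1; [rewrite mem_filter j | rewrite eQ1].
  case eQ2: Q2 aQ2 => [|f2 Q2'] aQ2.
    have [e eQ j] := witness u2 ltac:(by rewrite hu !inE eqxx orbT).
    have: e \in Q2; last by rewrite eQ2.
    rewrite mem_filter eQ andbT /=; apply/negP => j1.
    by move: n12; rewrite (joins_uniq j1 j u1v) eqxx.
  apply: (merge_e u1v aQ1).
  apply: (reach_perm perm_ok_e (_ : perm_eq _ ((f2 :: Q2') ++ (u1, v) :: O))).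
    by apply/permPl; exact: (perm_catCA [:: (u1,v)] (f2 :: Q2') O).
  apply: (merge_e _ aQ2); first by rewrite eq_sym.
  apply: (reach_perm perm_ok_e (perm_swap2 _ _ _)).
  apply: reach_step (E7 vV vab n12 u1v u2v (perm_refl _) hO) _; exact: reach_refl.
Qed.


Lemma never_n G G' v w1 w2 : star (step_n a b) G G' -> v \in nodes G ->
  w1 \in nodes G' -> w2 \in nodes G' -> w1 != w2 -> w1 != v -> w2 != v ->
  has (joins v w1) (edges G) -> has (joins v w2) (edges G) -> v \in nodes G'.
Proof.
move=> st; elim: st => [//|G1 G2 G3 st s IH] vG w1G w2G n12 n1 n2 h1 h2.
have sub := star_shrink shrink_n s.
have w1G2 := subsetP sub _ w1G; have w2G2 := subsetP sub _ w2G.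
have v2 := surv_n st vG n12 n1 n2 h1 h2.
exact: IH v2 w1G w2G n12 n1 n2 (keep_n st v2 w1G2 n1 h1) (keep_n st v2 w2G2 n2 h2).
Qed.

Lemma never_e G G' v w1 w2 w3 : star (step_e a b) G G' -> v \in nodes G ->
  w1 \in nodes G' -> w2 \in nodes G' -> w3 \in nodes G' ->
  [/\ w1 != w2, w2 != w3 & w3 != w1] -> [/\ w1 != v, w2 != v & w3 != v] ->
  has (joins v w1) (edges G) -> has (joins v w2) (edges G) -> has (joins v w3) (edges G) ->
  v \in nodes G'.
Proof.
move=> st; elim: st => [//|G1 G2 G3 st s IH] vG w1G w2G w3G nn [n1 n2 n3] h1 h2 h3.
have sub := star_shrink shrink_e s.
have w1G2 := subsetP sub _ w1G; have w2G2 := subsetP sub _ w2G; have w3G2 := subsetP sub _ w3G.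
have v2 := surv_e st vG nn (And3 n1 n2 n3) h1 h2 h3.
exact: IH v2 w1G w2G w3G nn (And3 n1 n2 n3)
  (keep_e st v2 w1G2 n1 h1) (keep_e st v2 w2G2 n2 h2) (keep_e st v2 w3G2 n3 h3).
Qed.

End Aux.

Theorem lemma1 :
  (forall (T : finType) (a b : T) (H : mgraph T) (v : T),
      wf_graph a b H -> no_parallel (edges H) ->
      v \in nodes H -> v \notin [:: a; b] -> has (incident v) (edges H) ->
      deletes_exactly (step_n a b) H v <-> #|neighbors (edges H) v| <= 1)
  /\
  (forall (T : finType) (a b : T) (H : mgraph T) (v : T),
      wf_graph a b H ->
      v \in nodes H -> v \notin [:: a; b] -> has (incident v) (edges H) ->
      deletes_exactly (step_e a b) H v <-> #|neighbors (edges H) v| <= 2).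
Proof.
split.
- move=> T a b [V E] v [_ _ wfE] np /= vV vab hinc; split.
    move=> [H' [st eH']]; rewrite leqNgt; apply/negP => /card_gt1P [w1 [w2 [m1 m2 n12]]].
    have nb : forall w, w \in neighbors E v -> w != v /\ w \in nodes H'.
      move=> w; rewrite nbrP => /andP[wv /hasP[e eE j]]; split => //.
      by rewrite eH' in_setD1 wv (joins_node j (allP wfE e eE)).
    have [n1 w1H] := nb _ m1; have [n2 w2H] := nb _ m2.
    move: m1 m2; rewrite !nbrP => /andP[_ h1] /andP[_ h2].
    have := never_n st vV w1H w2H n12 n1 n2 h1 h2.
    by rewrite eH' in_setD1 eqxx.
  by move=> hN; exact: build_n vV vab np hinc hN.
- move=> T a b [V E] v [_ _ wfE] /= vV vab hinc; split.
    move=> [H' [st eH']]; rewrite leqNgt; apply/negP => /card_gt2P [w1 [w2 [w3 [[m1 m2 m3] nn]]]].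
    have nb : forall w, w \in neighbors E v -> w != v /\ w \in nodes H'.
      move=> w; rewrite nbrP => /andP[wv /hasP[e eE j]]; split => //.
      by rewrite eH' in_setD1 wv (joins_node j (allP wfE e eE)).
    have [n1 w1H] := nb _ m1; have [n2 w2H] := nb _ m2; have [n3 w3H] := nb _ m3.
    move: m1 m2 m3; rewrite !nbrP => /andP[_ h1] /andP[_ h2] /andP[_ h3].
    have := never_e st vV w1H w2H w3H nn (And3 n1 n2 n3) h1 h2 h3.
    by rewrite eH' in_setD1 eqxx.
  by move=> hN; exact: build_e vV vab wfE hinc hN.
Qed.
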